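(* Let $\phi:\mathbb{R}^2\to\mathbb{R}^2$ be an invertible affine transformation and let $\sigma$ be the coordinatewise $\textsc{ReLU}$ on $\mathbb R^2$. Let $x\in\mathbb{R}^2$ and $\mathcal T\subset\mathbb{R}^2$ be such that $x$ lies in a bounded path-connected component of $\mathbb{R}^2\setminus\mathcal T$. Put $x^\prime:=\phi^{-1}\circ\sigma\circ\phi(x)$ and $\mathcal T^\prime:=\phi^{-1}\circ\sigma\circ\phi(\mathcal T)$. Then: (i) if $x^\prime=x$ and $x^\prime\notin\mathcal T^\prime$, then $x^\prime$ lies in a bounded path-connected component of $\mathbb R^2\setminus \mathcal T^\prime$; (ii) if $x^\prime\ne x$, then $x^\prime\in\mathcal T^\prime$.
   Context: $\sigma(x_1,x_2)=(\max\{x_1,0\},\max\{x_2,0\})$. *)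

(* Defs.v *)
From mathcomp Require Import all_boot all_order all_algebra.
From mathcomp Require Import all_classical all_reals all_analysis.
Set Implicit Arguments. Unset Strict Implicit. Unset Printing Implicit Defensive.
Import Order.TTheory GRing.Theory Num.Theory numFieldNormedType.Exports.
Local Open Scope ring_scope.
Local Open Scope classical_set_scope.

Section Defs.
Variable R : realType.

Definition relu2 (p : R * R) : R * R := (Num.max p.1 0, Num.max p.2 0).

Definition affine2 (phi : R * R -> R * R) : Prop :=
  exists a11 a12 a21 a22 b1 b2 : R, forall p : R * R,
    phi p = (a11 * p.1 + a12 * p.2 + b1, a21 * p.1 + a22 * p.2 + b2).

Definition path_in (S : set (R * R)) (x y : R * R) : Prop :=
  exists g : R -> R * R,
    {within `[0, 1], continuous g} /\ g 0 = x /\ g 1 = y /\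
    (forall t : R, 0 <= t <= 1 -> S (g t)).

Definition path_component (S : set (R * R)) (x : R * R) : set (R * R) :=
  [set y | path_in S x y].

Definition bounded2 (A : set (R * R)) : Prop :=
  exists M : R, forall y, A y -> `|y.1| <= M /\ `|y.2| <= M.

Definition in_bounded_component (S : set (R * R)) (x : R * R) : Prop :=
  S x /\ bounded2 (path_component S x).

End Defs.

(* Main.v *)
Require Import Defs.
From mathcomp Require Import all_boot all_order all_algebra.
From mathcomp Require Import all_classical all_reals all_analysis.
From mathcomp Require Import ring lra.
Import Order.TTheory GRing.Theory Num.Theory numFieldNormedType.Exports.
Local Open Scope ring_scope.
Local Open Scope classical_set_scope.

Section H.
Context {R : realType}.

Lemma within01_eps (m : R -> R) : {within `[0, 1], continuous m} ->
  forall s, 0 <= s <= 1 -> forall e, 0 < e -> exists2 d, 0 < d &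
  forall r, 0 <= r <= 1 -> `|s - r| < d -> `|m s - m r| < e.
Proof.
move=> /subspace_continuousP hc s hs e he.
have : m @ within `[0, 1] (nbhs s) --> m s.
  by apply: hc; rewrite /= in_itv /=.
move/cvgrPdist_lt => /(_ e he).
rewrite /within /= => /nbhs_ballP [d d0 hd].
exists d => // r hr hsr; apply: hd; first by rewrite /ball /=.
by rewrite /= in_itv /=.
Qed.

Lemma first_zero (m : R -> R) : {within `[0, 1], continuous m} ->
  0 <= m 0 -> forall t0, 0 <= t0 <= 1 -> m t0 < 0 ->
  exists s, [/\ 0 <= s, s < 1, m s = 0 & forall r, 0 <= r <= s -> 0 <= m r].
Proof.
move=> hc hm0 t0 /andP[t00 t01] hmt0.
pose E := [set t : R | (0 <= t <= 1) /\ m t < 0].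
have hE : E t0 by split => //; rewrite t00 t01.
have hlb : has_lbound E by exists 0 => t [/andP[]].
have hne : E !=set0 by exists t0.
set s := inf E.
have hs0 : 0 <= s by apply: lb_le_inf => // t [/andP[]].
have hst0 : s <= t0 by apply: ge_inf.
have Hlow : forall r, 0 <= r -> r < s -> 0 <= m r.
  move=> r r0 rs; rewrite leNgt; apply/negP => hr.
  have : s <= r by apply: ge_inf => //; split => //; rewrite r0 /=; lra.
  lra.
have hs01 : 0 <= s <= 1 by rewrite hs0 /=; lra.
have hms1 : 0 <= m s.
  rewrite leNgt; apply/negP => hms.
  have sp : 0 < s.
    rewrite lt_neqAle hs0 andbT; apply/negP => /eqP s0.
    by move: hms; rewrite -s0; lra.
  have he : 0 < - m s by lra.
  have [d d0 hd] := @within01_eps m hc s hs01 _ he.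
  pose r := if s <= d then s / 2 else s - d / 2.
  have hr : 0 <= r < s /\ s - r < d.
    rewrite /r; case: ifP => sd; lra.
  case: hr => /andP[r0 rs] srd.
  have := hd r _ _.
  rewrite r0 /= ltr_norml => /(_ ltac:(lra)).
  rewrite ltr_norml => /(_ ltac:(apply/andP; lra)) /andP[h1 h2].
  have := Hlow r r0 rs; lra.
have hms2 : m s <= 0.
  rewrite leNgt; apply/negP => hms.
  have [d d0 hd] := @within01_eps m hc s hs01 _ hms.
  have [t [/andP[t0' t1] ht] htd] := inf_adherent d0 (conj hne hlb).
  have st : s <= t by apply: ge_inf => //; split => //; rewrite t0' t1.
  have := hd t _ _.
  rewrite t0' t1 /= => /(_ isT).
  rewrite ltr_norml => /(_ ltac:(apply/andP; lra)).
  rewrite ltr_norml => /andP[h1 h2]; lra.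
have hms : m s = 0 by apply/eqP; rewrite eq_le hms1 hms2.
exists s; split => //.
  rewrite lt_neqAle; apply/andP; split; last lra.
  apply/negP => /eqP s1.
  have : s = t0 by lra.
  by move=> st; move: hmt0; rewrite -st hms ltxx.
move=> r /andP[r0 rs].
have [->|rs'] := eqVneq r s; first by rewrite hms.
by apply: Hlow => //; rewrite lt_neqAle rs' rs.
Qed.

Definition sh (p w : R * R) (u : R) : R * R := (p.1 + u * w.1, p.2 + u * w.2).

Lemma pair_cont (f g : R -> R) : continuous f -> continuous g ->
  continuous (fun t => (f t, g t)).
Proof.
move=> cf cg t.
apply: (@cvg_pair _ _ _ (nbhs t) (nbhs (f t)) (nbhs (g t))).
exact: cf. exact: cg.
Qed.

Lemma lin_cont (c d a b : R) : continuous (fun t : R => c + (a * t + b) * d).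
Proof.
move=> t.
apply: cvgD; first exact: cvg_cst.
apply: cvgM; last exact: cvg_cst.
by apply: cvgD; [apply: cvgM; [exact: cvg_cst| exact: cvg_id]| exact: cvg_cst].
Qed.

Lemma sh_cont (p w : R * R) (a b : R) : continuous (fun t => sh p w (a * t + b)).
Proof. by apply: pair_cont; apply: lin_cont. Qed.

Lemma sh0 p w : sh p w 0 = p.
Proof. by case: p => a b; rewrite /sh /= !mul0r !addr0. Qed.

Lemma path_ray (S : set (R * R)) p w L : 0 <= L ->
  (forall u, 0 <= u <= L -> S (sh p w u)) -> path_in S p (sh p w L).
Proof.
move=> L0 hS; exists (fun t => sh p w (L * t + 0)); split.
  exact/continuous_subspaceT/sh_cont.
split; first by rewrite mulr0 addr0 sh0.
split; first by rewrite mulr1 addr0.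
move=> t /andP[t0 t1]; apply: hS; rewrite addr0; apply/andP; split.
  exact: mulr_ge0.
by rewrite -[leRHS]mulr1; apply: ler_wpM2l.
Qed.

Lemma path_cat (S : set (R * R)) (g : R -> R * R) (s L : R) (w : R * R) :
  {within `[0, 1], continuous g} -> 0 <= s -> s < 1 -> 0 <= L ->
  (forall r, 0 <= r <= s -> S (g r)) ->
  (forall u, 0 <= u -> S (sh (g s) w u)) ->
  path_in S (g 0) (sh (g s) w ((1 - s) * L)).
Proof.
move=> hg s0 s1 L0 hS1 hS2.
pose h t := if t <= s then g t else sh (g s) w (L * t + (- s * L)).
exists h; split; last split; last split.
- have E : (`[0, 1] : set R) = `[0, s] `|` `[s, 1].
    rewrite eqEsubset; split => t /=; rewrite !in_itv /=.
      by move=> /andP[t0 t1]; case: (lerP t s) => ts; [left|right]; apply/andP; split => //; lra.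
    by case => /andP[t0 t1]; apply/andP; split => //; lra.
  rewrite E.
  apply: withinU_continuous; [exact: itv_closed | exact: itv_closed | |].
  + have hg' : {within `[0, s], continuous g}.
      apply: continuous_subspaceW hg => t /=; rewrite !in_itv /= => /andP[t0 t1].
      by apply/andP; split => //; lra.
    apply: (subspace_eq_continuous _ hg') => t; rewrite inE /= in_itv /= => /andP[t0 t1].
    by rewrite /h /from_subspace t1.
  + have hc : {within `[s, 1], continuous (fun t => sh (g s) w (L * t + (- s * L)))}.
      exact/continuous_subspaceT/sh_cont.
    apply: (subspace_eq_continuous _ hc) => t; rewrite inE /= in_itv /= => /andP[t0 t1].
    rewrite /h /from_subspace; case: ifP => // ts.
    have -> : t = s by apply/eqP; rewrite eq_le ts t0.
    by rewrite mulNr mulrC subrr sh0.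
- by rewrite /h s0.
- rewrite /h; case: ifP => [h1|_]; first by exfalso; lra.
  congr sh; ring.
- move=> t /andP[t0 t1]; rewrite /h; case: ifP => ts.
    by apply: hS1; rewrite t0.
  apply: hS2.
  have : L * t + - s * L = L * (t - s) by ring.
  move=> ->; apply: mulr_ge0 => //; move/negbT: ts; rewrite -ltNge; lra.
Qed.

Lemma big_one (a c M : R) : c != 0 -> exists L, 0 <= L /\ M < `|a + L * c|.
Proof.
move=> c0; have cp : 0 < `|c| by rewrite normr_gt0.
exists ((`|M| + `|a| + 1) / `|c|); split.
  by apply: divr_ge0 => //; rewrite addr_ge0.
have hLc : `|(`|M| + `|a| + 1) / `|c| * c| = `|M| + `|a| + 1.
  rewrite normrM normrM normfV normr_id -mulrA mulVf ?mulr1; last by rewrite gt_eqF.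
  by apply: ger0_norm; rewrite addr_ge0.
have := lerB_normD ((`|M| + `|a| + 1) / `|c| * c) a.
rewrite hLc (addrC (_ * c)) => h.
have := ler_norm M; lra.
Qed.

Lemma unbounded (p w : R * R) (M : R) : (w.1 != 0) || (w.2 != 0) ->
  exists L, 0 <= L /\ ~ (`|(sh p w L).1| <= M /\ `|(sh p w L).2| <= M).
Proof.
case/orP => hw.
  have [L [L0 hL]] := @big_one p.1 w.1 M hw.
  by exists L; split => // -[h1 h2]; move: h1 => /=; lra.
have [L [L0 hL]] := @big_one p.2 w.2 M hw.
by exists L; split => // -[h1 h2]; move: h2 => /=; lra.
Qed.

Definition dif (a b : R * R) : R * R := (a.1 - b.1, a.2 - b.2).

Lemma aff_sh (phi : R * R -> R * R) : affine2 phi ->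
  forall p w u, phi (sh p w u) = sh (phi p) (dif (phi (sh p w 1)) (phi p)) u.
Proof.
case=> [a11 [a12 [a21 [a22 [b1 [b2 H]]]]]] p w u.
rewrite !H /sh /dif /=; congr pair; ring.
Qed.

Lemma dir (phi phiinv : R * R -> R * R) : affine2 phi -> cancel phiinv phi ->
  forall p e, (e.1 != 0) || (e.2 != 0) ->
  exists2 w, (w.1 != 0) || (w.2 != 0) & forall u, phi (sh p w u) = sh (phi p) e u.
Proof.
move=> Haff Hr p e he.
pose q := phiinv (sh (phi p) e 1).
have hq : sh p (dif q p) 1 = q by case: q => a b; rewrite /sh /dif /= !mul1r !subrKC.
have key : forall u, phi (sh p (dif q p) u) = sh (phi p) e u.
  move=> u; rewrite aff_sh // hq /q Hr.
  by rewrite /sh /dif /=; congr pair; ring.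
exists (dif q p) => //.
apply/negPn/negP => /norP[/negPn/eqP h1 /negPn/eqP h2].
have hp : sh p (dif q p) 1 = p.
  by rewrite /sh h1 h2 !mulr0 !addr0 -surjective_pairing.
have := key 1; rewrite hp => he'.
have E1 := f_equal fst he'; have E2 := f_equal snd he'.
rewrite /sh /= mul1r in E1 E2.
have e1 : e.1 = 0 by lra.
have e2 : e.2 = 0 by lra.
by move: he; rewrite e1 e2 eqxx.
Qed.

Lemma relu_e1 (y : R * R) u : y.1 <= 0 -> 0 <= u -> relu2 (sh y (-1, 0) u) = relu2 y.
Proof.
move=> y1 u0; rewrite /relu2 /sh /= mulr0 addr0; congr pair.
case: lerP => h1; case: lerP => h2 //; lra.
Qed.

Lemma relu_e2 (y : R * R) u : y.2 <= 0 -> 0 <= u -> relu2 (sh y (0, -1) u) = relu2 y.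
Proof.
move=> y1 u0; rewrite /relu2 /sh /= mulr0 addr0; congr pair.
case: lerP => h1; case: lerP => h2 //; lra.
Qed.

Lemma aff_cont (phi : R * R -> R * R) : affine2 phi ->
  continuous (fun p => Num.min (phi p).1 (phi p).2).
Proof.
case=> [a11 [a12 [a21 [a22 [b1 [b2 H]]]]]].
have -> : (fun p => Num.min (phi p).1 (phi p).2) =
  (fun p : R * R => a11 * p.1 + a12 * p.2 + b1) \min (fun p : R * R => a21 * p.1 + a22 * p.2 + b2).
  by apply: funext => p; rewrite H.
have lc : forall a c b : R, continuous (fun p : R * R => a * p.1 + c * p.2 + b).
  move=> a c b p. apply: cvgD; last exact: cvg_cst.
  apply: cvgD; (apply: cvgM; first exact: cvg_cst).
  exact: cvg_fst. exact: cvg_snd.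
by apply: min_fun_continuous; apply: lc.
Qed.
End H.

Theorem lemma2 (R : realType) (phi phiinv : R * R -> R * R)
  (Haff : affine2 phi) (Hl : cancel phi phiinv) (Hr : cancel phiinv phi)
  (x : R * R) (T : set (R * R))
  (Hx : in_bounded_component (~` T) x) :
  let x' := phiinv (relu2 (phi x)) in
  let T' := (fun p => phiinv (relu2 (phi p))) @` T in
  (x' = x -> ~ T' x' -> in_bounded_component (~` T') x') /\
  (x' <> x -> T' x').
Proof.
move=> x' T'.
case: Hx => HxT [M HM].
have choose_e : forall y : R * R, (y.1 <= 0) || (y.2 <= 0) ->
    exists e : R * R, ((e.1 != 0) || (e.2 != 0)) /\
      forall u, 0 <= u -> relu2 (sh y e u) = relu2 y.
  move=> y /orP[h|h].
    exists (-1, 0); split; first by rewrite /= oppr_eq0 oner_eq0.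
    by move=> u u0; apply: relu_e1.
  exists (0, -1); split; first by rewrite /= oppr_eq0 oner_eq0 orbT.
  by move=> u u0; apply: relu_e2.
split.
- move=> hx hT'; split; first exact: hT'.
  rewrite hx; exists M => z [g [hg [g0 [g1 gS]]]].
  apply: (HM).
  have hphix : relu2 (phi x) = phi x by rewrite -{2}hx /x' Hr.
  have fixQ : forall z, 0 <= Num.min (phi z).1 (phi z).2 -> phiinv (relu2 (phi z)) = z.
    move=> z0; rewrite le_min => /andP[h1 h2].
    have -> : relu2 (phi z0) = phi z0.
      rewrite /relu2; case: (phi z0) h1 h2 => a b /= h1 h2; congr pair.
        by case: (lerP a 0) => //; lra.
      by case: (lerP b 0) => //; lra.
    exact: Hl.
  have notT : forall t, 0 <= t <= 1 -> 0 <= Num.min (phi (g t)).1 (phi (g t)).2 -> ~ T (g t).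
    by move=> t ht hm hT; apply: (gS t ht); exists (g t) => //; exact: fixQ.
  pose m t := Num.min (phi (g t)).1 (phi (g t)).2.
  have [allQ|] := pselect (forall t, 0 <= t <= 1 -> 0 <= m t).
    exists g; split => //; split => //; split => // t ht.
    exact: notT t ht (allQ t ht).
  move=> /existsNP [t0 /not_implyP [ht0 hmt0]].
  have hmt0' : m t0 < 0 by rewrite ltNge; apply/negP.
  have hmc : {within `[0, 1], continuous m}.
    move=> t; have := (@continuous_comp _ _ _ (from_subspace `[0, 1] g)
      (fun p => Num.min (phi p).1 (phi p).2) t (hg t) (@aff_cont R phi Haff _)).
    exact.
  have hm0 : 0 <= m 0.
    by rewrite /m g0 -hphix /relu2 /= le_min !le_max lexx !orbT.
  have [s [s0 s1 ms hms]] := @first_zero R m hmc hm0 t0 ht0 hmt0'.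
  have Qs : phiinv (relu2 (phi (g s))) = g s by apply: fixQ; rewrite -/(m s) ms.
  have hs01 : 0 <= s <= 1 by rewrite s0 /=; lra.
  have nTs : ~ T' (g s) := gS s hs01.
  have [e [he e_relu]] : exists e : R * R, ((e.1 != 0) || (e.2 != 0)) /\
      forall u, 0 <= u -> relu2 (sh (phi (g s)) e u) = relu2 (phi (g s)).
    apply: choose_e; move: ms; rewrite /m.
    by case: (lerP (phi (g s)).1 (phi (g s)).2) => _ ->; rewrite lexx ?orbT.
  have [w hw hpw] := @dir R phi phiinv Haff Hr (g s) e he.
  have ray : forall u, 0 <= u -> (~` T) (sh (g s) w u).
    move=> u u0 hT; apply: nTs; exists (sh (g s) w u) => //.
    by rewrite hpw e_relu.
  have [L [L0 hL]] := @unbounded R (g s) w M hw.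
  have h1s : 1 - s != 0 by rewrite subr_eq0 eq_sym lt_eqF.
  have hL' : 0 <= L / (1 - s) by apply: divr_ge0 => //; lra.
  have := @path_cat R (~` T) g s (L / (1 - s)) w hg s0 s1 hL' _ ray.
  rewrite g0 mulrC divfK // => hp.
  exfalso; apply: hL; apply: (HM); apply: hp.
  move=> r /andP[r0 rs]; apply: notT; first by rewrite r0 /=; lra.
  by apply: hms; rewrite r0 rs.
- move=> hne.
  have [e [he e_relu]] : exists e : R * R, ((e.1 != 0) || (e.2 != 0)) /\
      forall u, 0 <= u -> relu2 (sh (phi x) e u) = relu2 (phi x).
    apply: choose_e.
    case: (lerP (phi x).1 0) => h1 //; case: (lerP (phi x).2 0) => h2 //.
    exfalso; apply: hne; rewrite /x'.
    have -> : relu2 (phi x) = phi x.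
      rewrite /relu2; case: (phi x) h1 h2 => a b /= h1 h2; congr pair.
        by case: (lerP a 0) => //; lra.
      by case: (lerP b 0) => //; lra.
    exact: Hl.
  have [w hw hpw] := @dir R phi phiinv Haff Hr x e he.
  have [//|nT] := pselect (T' x'); exfalso.
  have ray : forall u, 0 <= u -> (~` T) (sh x w u).
    move=> u u0 hT; apply: nT; exists (sh x w u) => //.
    by rewrite hpw e_relu.
  have [L [L0 hL]] := @unbounded R x w M hw.
  apply: hL; apply: (HM).
  by apply: (@path_ray R _ x w L L0) => u /andP[u0 _]; apply: ray.
Qed.
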